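(* Let $A,B,C$, $L,\mu,\mu_x$, $\kappa$, $\kappa_x$ be as below, let $r\ge2\kappa$, $\eta_x=\frac{1}{4rL}$, $\eta_y=\frac{1}{4L}$ (so $r=\eta_y/\eta_x$), and $M=\begin{pmatrix}-C & -B\\ rB^\top & -rA\end{pmatrix}$. Let $\rho_1$ be the spectral radius of $I+\eta_xM$ and $\rho_2$ the spectral radius of $I+\eta_xM+\eta_x^2M^2$. Then $$\max\{\rho_1,\rho_2\}\le1-\frac{1}{64\,r\kappa_x}.$$
   Context: $A\in\mathbb{R}^{m\times m}$, $C\in\mathbb{R}^{n\times n}$ symmetric, $B\in\mathbb{R}^{n\times m}$, with $\mu I\preceq A\preceq LI$ ($0<\mu\le L$), $\|B\|_2\le L$, $\|C\|_2\le L$, and $C+BA^{-1}B^\top\succ0$. $\mu_x=\min\{L,\lambda_{\min}(C+BA^{-1}B^\top)\}$, $\kappa=L/\mu$, $\kappa_x=L/\mu_x$. The spectral radius is the largest modulus of a (complex) eigenvalue. *)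

(* Defs.v *)
(* the statement is purely algebraic, stated over an
   arbitrary real closed field R, with complex numbers R[i] from
   mathcomp-real-closed. *)
From HB Require Import structures.
From mathcomp Require Import all_boot all_order all_algebra.
From mathcomp Require Import complex.
Set Implicit Arguments. Unset Strict Implicit. Unset Printing Implicit Defensive.
Import Order.TTheory GRing.Theory Num.Theory.
Local Open Scope ring_scope.

Definition psd (R : realFieldType) k (S : 'M[R]_k) : Prop :=
  forall v : 'cV[R]_k, 0 <= (v^T *m S *m v) 0 0.
Definition pd (R : realFieldType) k (S : 'M[R]_k) : Prop :=
  forall v : 'cV[R]_k, v != 0 -> 0 < (v^T *m S *m v) 0 0.
Definition loewner_le (R : realFieldType) k (X Y : 'M[R]_k) : Prop := psd (Y - X).

Definition vnorm2 (R : rcfType) k (v : 'cV[R]_k) : R := Num.sqrt ((v^T *m v) 0 0).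
Definition opnorm2_le (R : rcfType) p q (B : 'M[R]_(p, q)) (c : R) : Prop :=
  forall v : 'cV[R]_q, vnorm2 (B *m v) <= c * vnorm2 v.

Definition is_lambda_min (R : realFieldType) k (S : 'M[R]_k) (lmin : R) : Prop :=
  eigenvalue S lmin /\ forall l : R, eigenvalue S l -> lmin <= l.

Definition cplx_mx (R : rcfType) p q (X : 'M[R]_(p, q)) : 'M[R[i]]_(p, q) :=
  map_mx (fun x : R => x%:C%C) X.

Definition is_spectral_radius (R : rcfType) k (X : 'M[R]_k) (rho : R) : Prop :=
  (exists z : R[i], eigenvalue (cplx_mx X) z /\ ComplexField.Normc.normc z = rho) /\
  (forall z : R[i], eigenvalue (cplx_mx X) z -> ComplexField.Normc.normc z <= rho).

Definition Mmat (R : ringType) n m (A : 'M[R]_m) (B : 'M[R]_(n, m)) (C : 'M[R]_n) (r : R)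
  : 'M[R]_(n + m) := block_mx (- C) (- B) (r *: B^T) (- (r *: A)).

(* Main.v *)
Require Import Defs.
From HB Require Import structures.
From mathcomp Require Import all_boot all_order all_algebra.
From mathcomp Require Import complex.
From mathcomp Require Import spectral sesquilinear.
From mathcomp Require Import ring lra.
Import Order.TTheory GRing.Theory Num.Theory.
Local Open Scope ring_scope.
Set Implicit Arguments. Unset Strict Implicit. Unset Printing Implicit Defensive.

Section Dot.
Variable R : realFieldType.
Variable k : nat.
Implicit Types u v w : 'rV[R]_k.

Definition dot u w : R := (u *m w^T) 0 0.

Lemma dotE u w : dot u w = \sum_j u 0 j * w 0 j.
Proof. by rewrite /dot mxE; apply: eq_bigr => j _; rewrite mxE. Qed.

Lemma dotC u w : dot u w = dot w u.
Proof. by rewrite !dotE; apply: eq_bigr => j _; rewrite mulrC. Qed.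

Lemma dotDl u v w : dot (u + v) w = dot u w + dot v w.
Proof. by rewrite /dot mulmxDl mxE. Qed.

Lemma dotDr u v w : dot w (u + v) = dot w u + dot w v.
Proof. by rewrite ![dot w _]dotC dotDl. Qed.

Lemma dotZl c u w : dot (c *: u) w = c * dot u w.
Proof. by rewrite /dot -scalemxAl mxE. Qed.

Lemma dotZr c u w : dot w (c *: u) = c * dot w u.
Proof. by rewrite ![dot w _]dotC dotZl. Qed.

Lemma dotNl u w : dot (- u) w = - dot u w.
Proof. by rewrite -scaleN1r dotZl mulN1r. Qed.

Lemma dotNr u w : dot w (- u) = - dot w u.
Proof. by rewrite ![dot w _]dotC dotNl. Qed.

Lemma dotBl u v w : dot (u - v) w = dot u w - dot v w.
Proof. by rewrite dotDl dotNl. Qed.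

Lemma dotBr u v w : dot w (u - v) = dot w u - dot w v.
Proof. by rewrite dotDr dotNr. Qed.

Lemma dot0l w : dot 0 w = 0.
Proof. by rewrite /dot mul0mx mxE. Qed.

Lemma dot_ge0 u : 0 <= dot u u.
Proof. by rewrite dotE; apply: sumr_ge0 => j _; rewrite -expr2 sqr_ge0. Qed.

Lemma dot_eq0 u : dot u u = 0 -> u = 0.
Proof.
rewrite dotE => /eqP; rewrite psumr_eq0; last by move=> j _; rewrite -expr2 sqr_ge0.
move=> /allP h; apply/rowP => j; rewrite mxE.
by have /implyP/(_ isT) := h j (mem_index_enum _); rewrite mulf_eq0 orbb => /eqP.
Qed.

Lemma CS2 (x1 x2 w1 w2 : 'rV[R]_k) :
  (dot x1 w1 + dot x2 w2) ^+ 2 + (dot x2 w1 - dot x1 w2) ^+ 2 <=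
  (dot x1 x1 + dot x2 x2) * (dot w1 w1 + dot w2 w2).
Proof.
set X := dot x1 x1 + dot x2 x2; set W := dot w1 w1 + dot w2 w2.
set P := dot x1 w1 + dot x2 w2; set Q := dot x2 w1 - dot x1 w2.
have X0 : 0 <= X by rewrite addr_ge0 ?dot_ge0.
have W0 : 0 <= W by rewrite addr_ge0 ?dot_ge0.
have [Xz|Xp] := eqVneq X 0.
  have h1 : dot x1 x1 = 0 by have := dot_ge0 x1; have := dot_ge0 x2; move: Xz; rewrite /X; lra.
  have h2 : dot x2 x2 = 0 by have := dot_ge0 x1; have := dot_ge0 x2; move: Xz; rewrite /X; lra.
  rewrite /P /Q (dot_eq0 h1) (dot_eq0 h2) !dot0l Xz; lra.
have Xpos : 0 < X by rewrite lt_def Xp X0.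
set z1 := X *: w1 - P *: x1 - Q *: x2.
set z2 := X *: w2 - P *: x2 + Q *: x1.
have key : dot z1 z1 + dot z2 z2 = X * (X * W - P ^+ 2 - Q ^+ 2).
  rewrite /z1 /z2 !(dotDl, dotBl, dotDr, dotBr, dotNl, dotNr, dotZl, dotZr).
  try rewrite [dot w1 x1]dotC; try rewrite [dot w1 x2]dotC; try rewrite [dot w2 x1]dotC;
  try rewrite [dot w2 x2]dotC; try rewrite [dot x2 x1]dotC.
  rewrite /X /W /P /Q; ring.
have : 0 <= X * (X * W - P ^+ 2 - Q ^+ 2) by rewrite -key addr_ge0 ?dot_ge0.
rewrite pmulr_rge0 //; lra.
Qed.

Lemma CS1 (x w : 'rV[R]_k) : dot x w ^+ 2 <= dot x x * dot w w.
Proof.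
have := CS2 x 0 w 0; rewrite !dot0l ![dot _ 0]dotC !dot0l !addr0 subr0 expr0n /= addr0.
by [].
Qed.

End Dot.

Section Core.
Variable R : rcfType.

Lemma rmu_ge (L mu r : R) : 0 < mu -> 2 * (L / mu) <= r -> 2 * L <= r * mu.
Proof.
move=> mu0 hr.
have : 2 * (L / mu) * mu <= r * mu by rewrite ler_pM2r.
by rewrite -mulrA divfK ?gt_eqF.
Qed.

Lemma sq_le_abs (x c : R) : 0 <= c -> x ^+ 2 <= c ^+ 2 -> - c <= x <= c.
Proof.
move=> c0 h; have : `|x| <= c.
  by rewrite -(ler_pXn2r (isT : (0 < 2)%N)) ?nnegrE // real_normK ?num_real.
by rewrite ler_norml.
Qed.

Lemma core_cplx (L mu r mux a b X Yp al g P Q : R) :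
  0 < mu -> mu <= L -> 2 * (L / mu) <= r -> mux <= L ->
  b != 0 -> 0 <= X -> 0 <= Yp -> 0 < X + Yp -> mu * Yp <= al ->
  g ^+ 2 <= L ^+ 2 * X ^+ 2 -> P ^+ 2 + Q ^+ 2 <= L ^+ 2 * X * Yp ->
  - g + r * P = a * X -> - P - r * al = a * Yp -> r * Q = - b * X -> Q = - b * Yp ->
  [/\ a ^+ 2 + b ^+ 2 <= 64 / 25 * r ^+ 2 * L ^+ 2, a <= - mux / 2 &
      8 * r * L * a + (a ^+ 2 + b ^+ 2) <= - (r * L * mux) / 2].
Proof.
move=> mu0 muL hr muxL b0 X0 Y0 XY0 hal hg hPQ I1 I2 J1 J2.
have L0 : 0 < L by apply: lt_le_trans muL.
have rmu := rmu_ge mu0 hr.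
have r2 : 2 <= r by nra.
have hX : X = r * Yp.
  apply/eqP; rewrite -subr_eq0; apply/eqP.
  have : b * (X - r * Yp) = 0 by rewrite J2 in J1; rewrite mulrBr; lra.
  by move/eqP; rewrite mulf_eq0 (negbTE b0) /= => /eqP.
have Xp : 0 < X by rewrite hX; nra.
have /andP[g1 g2] : - (L * X) <= g <= L * X.
  by apply: sq_le_abs; [nra | rewrite exprMn].
have h2a : 2 * a * X <= - L * X.
  have : 2 * a * X = - g - r * (r * al) by rewrite hX; nra.
  move=> ->; rewrite hX in g1 g2 *; nra.
have ha : a <= - L / 2.
  rewrite ler_pdivlMr //; nra.
have hab : (a ^+ 2 + b ^+ 2) * X ^+ 2 <= 2 * L ^+ 2 * (r + 1) * X ^+ 2.
  have e1 : (a ^+ 2 + b ^+ 2) * X ^+ 2 = (r * P - g) ^+ 2 + (r * Q) ^+ 2.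
    have -> : r * P - g = a * X by rewrite -I1; ring.
    by rewrite J1; ring.
  rewrite e1.
  have : (r * P - g) ^+ 2 <= 2 * (r * P) ^+ 2 + 2 * g ^+ 2.
    rewrite -subr_ge0; have -> : 2 * (r * P) ^+ 2 + 2 * g ^+ 2 - (r * P - g) ^+ 2 = (r * P + g) ^+ 2 by ring.
    by rewrite sqr_ge0.
  have : r ^+ 2 * (P ^+ 2 + Q ^+ 2) <= r ^+ 2 * (L ^+ 2 * X * Yp) by rewrite ler_wpM2l // sqr_ge0.
  rewrite hX in hg *; nra.
have hab2 : a ^+ 2 + b ^+ 2 <= 2 * L ^+ 2 * (r + 1).
  by rewrite -(ler_pM2r (_ : 0 < X ^+ 2)) ?exprn_gt0.
have hr1 : 2 * (r + 1) <= 64 / 25 * r ^+ 2 by nra.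
have L2 : 0 <= L ^+ 2 by rewrite sqr_ge0.
split.
- apply: (le_trans hab2).
  have -> : 2 * L ^+ 2 * (r + 1) = L ^+ 2 * (2 * (r + 1)) by ring.
  have -> : 64 / 25 * r ^+ 2 * L ^+ 2 = L ^+ 2 * (64 / 25 * r ^+ 2) by ring.
  by rewrite ler_wpM2l.
- nra.
- have : 8 * r * L * a <= 8 * r * L * (- L / 2) by rewrite ler_wpM2l //; nra.
  have : r * L * mux <= r * L * L by rewrite ler_wpM2l //; nra.
  nra.
Qed.

Lemma core_real (L mu r lmin mux a X Y al om g P s : R) :
  0 < mu -> mu <= L -> 2 * (L / mu) <= r -> mux <= L -> mux <= lmin -> 0 < lmin -> 0 <= mux ->
  0 <= X -> 0 <= Y -> 0 < X + Y -> mu * Y <= al -> al <= L * Y ->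
  0 <= om -> mu * om <= Y ->
  g ^+ 2 <= L ^+ 2 * X ^+ 2 -> P ^+ 2 <= L ^+ 2 * X * Y -> lmin * X <= s ->
  - g + r * P = a * X -> - P - r * al = a * Y ->
  s = - a * X + a * r * Y + a ^+ 2 * om ->
  [/\ a ^+ 2 <= 64 / 25 * r ^+ 2 * L ^+ 2, a <= - mux / 2 &
      8 * r * L * a + a ^+ 2 <= - (r * L * mux) / 2].
Proof.
move=> mu0 muL hr muxL muxl l0 mux0 X0 Y0 XY0 hal hal2 om0 hom hg hP hs I1 I2 hS.
have L0 : 0 < L by apply: lt_le_trans muL.
have rmu := rmu_ge mu0 hr.
have r2 : 2 <= r by nra.
have /andP[g1 g2] : - (L * X) <= g <= L * X.
  by apply: sq_le_abs; [nra | rewrite exprMn].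
have hA : a * (X + r * Y) = - g - r * (r * al).
  have hP' : P = - (r * al) - a * Y by lra.
  by rewrite mulrDr -I1 hP'; ring.
have XrY : 0 < X + r * Y by nra.
have alo : - (r * L) <= a.
  rewrite -(ler_pM2r XrY) hA.
  have : r * (r * al) <= r * (r * (L * Y)) by rewrite !ler_wpM2l //; nra.
  nra.
have hup : a <= - mux.
  rewrite leNgt; apply/negP => ha.
  have hX0 : 0 < X.
    rewrite lt_neqAle X0 andbT; apply/negP => /eqP hX.
    rewrite -hX in hP XY0; rewrite mulr0 mul0r in hP.
    have P0 : P = 0 by apply/eqP; rewrite -sqrf_eq0 eq_le hP sqr_ge0.
    rewrite P0 in I2; rewrite add0r in XY0.
    have : a * Y <= - (r * mu) * Y.
      rewrite -I2; have : r * (mu * Y) <= r * al by rewrite ler_wpM2l //; nra.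
      nra.
    rewrite ler_pM2r //; nra.
  have [a0|a0] := lerP a 0.
  - have h1 : mu * s <= - mu * a * X + a * Y * (mu * r + a).
      rewrite hS.
      have : mu * (a ^+ 2 * om) <= a ^+ 2 * Y.
        by rewrite mulrCA ler_wpM2l // sqr_ge0.
      nra.
    have h2 : a * Y * (mu * r + a) <= 0.
      rewrite -mulrA; apply: mulr_le0_ge0 => //; apply: mulr_ge0 => //; nra.
    have : mu * (lmin * X) <= mu * s by rewrite ler_pM2l.
    have : - a * X < mux * X.
      rewrite ltr_pM2r //; lra.
    have : mux * X <= lmin * X by rewrite ler_pM2r.
    nra.
  - have key : r * mu * (s - g) <= (r * mu + a) * (r * (r * al) + r * a * Y).
      rewrite -subr_ge0.
      have -> : (r * mu + a) * (r * (r * al) + r * a * Y) - r * mu * (s - g)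
              = a * r * (r * al - r * (mu * Y) + a * Y - a * (mu * om)).
        rewrite hS; have -> : g = - a * X - r * (r * al) - r * a * Y by nra.
        ring.
      apply: mulr_ge0; first by nra.
      have : a * (mu * om) <= a * Y by rewrite ler_wpM2l //; lra.
      have : r * (mu * Y) <= r * al by rewrite ler_wpM2l //; nra.
      lra.
    have e : r * (r * al) + r * a * Y = - a * X - g by nra.
    rewrite e in key.
    have : r * mu * (lmin * X) <= r * mu * s by rewrite ler_pM2l //; nra.
    have : 0 < r * mu * (lmin * X).
      by apply: mulr_gt0; [apply: mulr_gt0 => //; lra | exact: mulr_gt0].
    have : a * X * (L - r * mu - a) < 0.
      rewrite pmulr_rlt0; [lra | exact: mulr_gt0].
    nra.
have a0 : a <= 0 by lra.
have rL : 0 < r * L by apply: mulr_gt0 => //; lra.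
have h1 : a ^+ 2 <= - (r * L) * a.
  rewrite -subr_ge0; have -> : - (r * L) * a - a ^+ 2 = (- a) * (a + r * L) by ring.
  apply: mulr_ge0; lra.
have h2 : - (r * L) * a <= (r * L) ^+ 2.
  have h : - a <= r * L by lra.
  have := ler_wpM2l (ltW rL) h.
  have -> : r * L * - a = - (r * L) * a by ring.
  by rewrite expr2.
have h3 : r * L * a <= r * L * (- mux) by rewrite ler_wpM2l // ltW.
split.
- apply: (le_trans h1); apply: (le_trans h2).
  rewrite exprMn -mulrA ler_pMl; last by rewrite mulr_gt0 // exprn_gt0 //; lra.
  lra.
- lra.
- have : 0 <= r * L * mux by apply: mulr_ge0 => //; lra.
  lra.
Qed.
End Core.

Lemma fin2 (R : realFieldType) (A B d : R) : 0 <= d ->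
  A ^+ 2 + B ^+ 2 <= 4 / 25 -> A <= - (8 * d) -> 2 * A + (A ^+ 2 + B ^+ 2) <= - (2 * d) ->
  (1 + A + (A ^+ 2 - B ^+ 2)) ^+ 2 + (B + 2 * A * B) ^+ 2 <= (1 - d) ^+ 2.
Proof.
move=> d0 h1 h2 h3.
set N := A ^+ 2 + B ^+ 2.
have -> : (1 + A + (A ^+ 2 - B ^+ 2)) ^+ 2 + (B + 2 * A * B) ^+ 2
   = 1 + 2 * A + 3 * A ^+ 2 - B ^+ 2 + 2 * A * N + N ^+ 2 by rewrite /N; ring.
have hA : A ^+ 2 <= 4 / 25 by have := sqr_ge0 B; lra.
have hA2 : - (2 / 5) <= A.
  rewrite leNgt; apply/negP => h.
  have : (2 / 5) ^+ 2 < A ^+ 2.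
    by rewrite -[X in _ < X]sqrrN ltr_pXn2r ?nnegrE //; lra.
  lra.
have N0 : 0 <= N by rewrite /N; have := sqr_ge0 A; have := sqr_ge0 B; lra.
have A0 : A <= 0 by lra.
have e1 : 2 * A * N <= 0.
  by rewrite -mulrA; apply: mulr_ge0_le0 => //; apply: mulr_le0_ge0.
have e2 : N ^+ 2 <= 4 / 25 * N by rewrite expr2 ler_wpM2r.
have e3 : 3 * A ^+ 2 <= - (6 / 5) * A.
  have : A * A <= (- (2/5)) * A by rewrite ler_wnM2r.
  rewrite expr2; lra.
have -> : (1 - d) ^+ 2 = 1 - 2 * d + d ^+ 2 by ring.
have := sqr_ge0 d; have := sqr_ge0 B.
rewrite /N in e1 e2 *; lra.
Qed.

Lemma dot_mul (R : realFieldType) p q (K : 'M[R]_(p, q)) (u : 'rV_p) (w : 'rV_q) :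
  dot (u *m K) w = dot u (w *m K^T).
Proof. by rewrite /dot trmx_mul trmxK mulmxA. Qed.

Lemma opnorm_dot (R : rcfType) p q (K : 'M[R]_(p, q)) c : 0 <= c -> opnorm2_le K c ->
  forall u : 'rV_q, dot (u *m K^T) (u *m K^T) <= c ^+ 2 * dot u u.
Proof.
move=> c0 hK u; have := hK u^T; rewrite /vnorm2.
have -> : ((K *m u^T)^T *m (K *m u^T)) 0 0 = dot (u *m K^T) (u *m K^T).
  by rewrite /dot !trmx_mul !trmxK.
rewrite trmxK -/(dot u u) => h.
have h0 := sqrtr_ge0 (dot (u *m K^T) (u *m K^T)).
have := ler_pM h0 h0 h h.
by rewrite -!expr2 sqr_sqrtr ?dot_ge0 // exprMn sqr_sqrtr ?dot_ge0.
Qed.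

Lemma psd_dot (R : realFieldType) k (K : 'M[R]_k) : psd K -> forall u, 0 <= dot (u *m K) u.
Proof. by move=> h u; have := h u^T; rewrite trmxK. Qed.

Lemma pd_dot (R : realFieldType) k (K : 'M[R]_k) : pd K -> forall u, u != 0 -> 0 < dot (u *m K) u.
Proof. by move=> h u u0; have := h u^T; rewrite trmxK trmx_eq0; apply. Qed.

Lemma loewner_dot (R : realFieldType) k (X Y : 'M[R]_k) : loewner_le X Y ->
  forall u, dot (u *m X) u <= dot (u *m Y) u.
Proof.
move=> h u; have := psd_dot h u.
by rewrite mulmxBr dotBl subr_ge0.
Qed.

Lemma dot_scalar (R : realFieldType) k (c : R) (u : 'rV[R]_k) : dot (u *m c%:M) u = c * dot u u.
Proof. by rewrite mul_mx_scalar dotZl. Qed.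

Lemma dot_sym (R : realFieldType) k (K : 'M[R]_k) (u w : 'rV_k) : K^T = K ->
  dot (u *m K) w = dot (w *m K) u.
Proof. by move=> hK; rewrite dot_mul hK dotC. Qed.

Lemma A_unit (R : realFieldType) k (A : 'M[R]_k) mu : 0 < mu -> loewner_le mu%:M A ->
  A \in unitmx.
Proof.
move=> mu0 hA; rewrite unitmxE unitfE; apply/negP => /det0P [v v0 vA].
have := loewner_dot hA v; rewrite vA dot0l dot_scalar.
have : 0 < dot v v.
  by rewrite lt_def dot_ge0 andbT; apply/negP => /eqP /dot_eq0 h; move: v0; rewrite h eqxx.
move=> h1 h2; have : 0 < mu * dot v v by rewrite mulr_gt0.
by rewrite ltNge h2.
Qed.

Lemma om_bounds (R : realFieldType) k (A : 'M[R]_k) mu : 0 < mu -> A^T = A ->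
  loewner_le mu%:M A -> forall y : 'rV_k,
  0 <= dot (y *m invmx A) y /\ mu * dot (y *m invmx A) y <= dot y y.
Proof.
move=> mu0 hs hA y; have Au := A_unit mu0 hA.
set u := y *m invmx A; set om := dot u y.
have uA : u *m A = y by rewrite /u mulmxKV.
have e : om = dot (u *m A) u by rewrite /om -{1}uA dotC.
have h1 : mu * dot u u <= om by rewrite e -dot_scalar loewner_dot.
have om0 : 0 <= om by apply: le_trans h1; rewrite mulr_ge0 ?dot_ge0 // ltW.
split => //.
have cs := CS1 u y; rewrite -/om in cs.
have : mu * om ^+ 2 <= om * dot y y.
  apply: le_trans (_ : mu * (dot u u * dot y y) <= _).
    by rewrite ler_wpM2l // ltW.
  by rewrite mulrA ler_wpM2r ?dot_ge0.
have [->|omp] := eqVneq om 0; first by rewrite mulr0 dot_ge0.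
have omp' : 0 < om by rewrite lt_def omp om0.
by move=> h; rewrite -(ler_pM2r omp') [dot y y * om]mulrC -mulrA -expr2.
Qed.

Lemma real_case (R : rcfType) (m n : nat)
  (A : 'M[R]_m) (B : 'M[R]_(n, m)) (C : 'M[R]_n) (L mu : R)
  (hmu : 0 < mu) (hmuL : mu <= L)
  (hAsym : A^T = A) (hCsym : C^T = C)
  (hAlo : loewner_le (mu%:M) A) (hAhi : loewner_le A (L%:M))
  (hB : opnorm2_le B L) (hC : opnorm2_le C L)
  (lmin : R) (hl0 : 0 < lmin)
  (hspec : forall x : 'rV_n, lmin * dot x x <= dot (x *m (C + B *m invmx A *m B^T)) x)
  (r : R) (hr : 2 * (L / mu) <= r) (w : 'rV[R]_(n + m)) (a : R) :
  w != 0 -> w *m Mmat A B C r = a *: w ->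
  let mux := Num.min L lmin in
  [/\ a ^+ 2 <= 64 / 25 * r ^+ 2 * L ^+ 2, a <= - mux / 2 &
      8 * r * L * a + a ^+ 2 <= - (r * L * mux) / 2].
Proof.
move=> w0 hw mux.
have L0 : 0 < L by apply: lt_le_trans hmuL.
set x := lsubmx w; set y := rsubmx w.
have wE : w = row_mx x y by rewrite hsubmxK.
move: hw; rewrite wE /Mmat mul_row_block scale_row_mx => /eq_row_mx [E1 E2].
rewrite !mulmxN -!scalemxAr in E1 E2.
set X := dot x x; set Y := dot y y; set g := dot (x *m C) x.
set P := dot (y *m B^T) x; set al := dot (y *m A) y.
set om := dot (y *m invmx A) y.
set s := dot (x *m (C + B *m invmx A *m B^T)) x.
have I1 : - g + r * P = a * X.
  by have := congr1 (fun z => dot z x) E1; rewrite /= dotDl dotNl dotZl dotZl.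
have I2 : - P - r * al = a * Y.
  have := congr1 (fun z => dot z y) E2; rewrite /= dotDl !dotNl dotZl dotZl.
  by rewrite dot_mul dotC.
have xB : x *m B = - (a *: y) - r *: (y *m A).
  by rewrite -E2 opprD !opprK addrK.
have Au := A_unit hmu hAlo.
have hS : s = - a * X + a * r * Y + a ^+ 2 * om.
  rewrite /s mulmxDr dotDl -/g !mulmxA dot_mul trmxK xB.
  rewrite mulmxBl mulNmx -!scalemxAl mulmxK //.
  rewrite !(dotDl, dotBl, dotDr, dotBr, dotNl, dotNr, dotZl, dotZr).
  have e1 : dot (y *m invmx A) (y *m A) = Y.
    by rewrite dotC dot_sym // dotC -/Y; congr dot; rewrite mulmxKV. 
  have e2 : dot y (y *m A) = al by rewrite dotC.
  rewrite e1 e2 -/om.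
  have hg : g = r * P - a * X by lra.
  have hP : P = - (r * al) - a * Y by lra.
  rewrite hg hP -/Y; ring.
have [om0 hom] := om_bounds hmu hAsym hAlo y.
have hal : mu * Y <= al by rewrite -dot_scalar loewner_dot.
have hal2 : al <= L * Y by rewrite -dot_scalar loewner_dot.
have hxC : dot (x *m C) (x *m C) <= L ^+ 2 * X.
  by have := opnorm_dot (ltW L0) hC x; rewrite hCsym.
have hg : g ^+ 2 <= L ^+ 2 * X ^+ 2.
  have := CS1 x (x *m C); rewrite -/X dotC -/g => h.
  apply: le_trans h _; rewrite expr2 mulrA [L ^+ 2 * X]mulrC -mulrA ler_wpM2l ?dot_ge0 //.
have hP : P ^+ 2 <= L ^+ 2 * X * Y.
  have := CS1 (y *m B^T) x; rewrite -/P -/X => h.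
  apply: le_trans h _; have := opnorm_dot (ltW L0) hB y; rewrite -/Y => h2.
  rewrite mulrC mulrAC [X * _]mulrC; apply: ler_wpM2r => //; exact: dot_ge0.
have hs : lmin * X <= s by apply: hspec.
have XY0 : 0 < X + Y.
  rewrite lt_def addr_ge0 ?dot_ge0 // andbT; apply/negP => /eqP h.
  have hX : X = 0 by have := dot_ge0 x; have := dot_ge0 y; rewrite -/X -/Y; lra.
  have hY : Y = 0 by have := dot_ge0 x; have := dot_ge0 y; rewrite -/X -/Y; lra.
  by move: w0; rewrite wE (dot_eq0 hX) (dot_eq0 hY) row_mx0 eqxx.
have mux0 : 0 <= mux by rewrite /mux le_min (ltW L0) (ltW hl0).
have muxL : mux <= L by rewrite /mux ge_min lexx.
have muxl : mux <= lmin by rewrite /mux ge_min lexx orbT.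
exact: (core_real hmu hmuL hr muxL muxl hl0 mux0 (dot_ge0 x) (dot_ge0 y) XY0 hal hal2 om0 hom hg hP hs I1 I2 hS).
Qed.

Lemma cplx_case (R : rcfType) (m n : nat)
  (A : 'M[R]_m) (B : 'M[R]_(n, m)) (C : 'M[R]_n) (L mu : R)
  (hmu : 0 < mu) (hmuL : mu <= L)
  (hAsym : A^T = A) (hCsym : C^T = C)
  (hAlo : loewner_le (mu%:M) A)
  (hB : opnorm2_le B L) (hC : opnorm2_le C L)
  (mux : R) (muxL : mux <= L)
  (r : R) (hr : 2 * (L / mu) <= r) (p q : 'rV[R]_(n + m)) (a b : R) :
  (p != 0) || (q != 0) -> b != 0 ->
  p *m Mmat A B C r = a *: p - b *: q ->
  q *m Mmat A B C r = a *: q + b *: p ->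
  [/\ a ^+ 2 + b ^+ 2 <= 64 / 25 * r ^+ 2 * L ^+ 2, a <= - mux / 2 &
      8 * r * L * a + (a ^+ 2 + b ^+ 2) <= - (r * L * mux) / 2].
Proof.
move=> pq0 b0 hp hq.
have L0 : 0 < L by apply: lt_le_trans hmuL.
set x1 := lsubmx p; set y1 := rsubmx p; set x2 := lsubmx q; set y2 := rsubmx q.
have pE : p = row_mx x1 y1 by rewrite hsubmxK.
have qE : q = row_mx x2 y2 by rewrite hsubmxK.
move: hp; rewrite pE qE /Mmat mul_row_block !scale_row_mx opp_row_mx add_row_mx.
move=> /eq_row_mx [E1 E2].
move: hq; rewrite pE qE /Mmat mul_row_block !scale_row_mx add_row_mx.
move=> /eq_row_mx [E3 E4].
rewrite !mulmxN -!scalemxAr in E1 E2 E3 E4.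
set X := dot x1 x1 + dot x2 x2; set Yp := dot y1 y1 + dot y2 y2.
set g := dot (x1 *m C) x1 + dot (x2 *m C) x2.
set P := dot (y1 *m B^T) x1 + dot (y2 *m B^T) x2.
set Q := dot (y1 *m B^T) x2 - dot (y2 *m B^T) x1.
set al := dot (y1 *m A) y1 + dot (y2 *m A) y2.
have d1 := congr1 (fun z => dot z x1) E1.
have d2 := congr1 (fun z => dot z x2) E3.
have d3 := congr1 (fun z => dot z x2) E1.
have d4 := congr1 (fun z => dot z x1) E3.
have d5 := congr1 (fun z => dot z y1) E2.
have d6 := congr1 (fun z => dot z y2) E4.
have d7 := congr1 (fun z => dot z y2) E2.
have d8 := congr1 (fun z => dot z y1) E4.
move: d1 d2 d3 d4 d5 d6 d7 d8 => /=.
rewrite !(dotDl, dotBl, dotNl, dotZl).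
rewrite (dot_sym x1 x2 hCsym) (dot_sym y1 y2 hAsym) [dot x2 x1]dotC [dot y2 y1]dotC.
rewrite !(dot_mul B x1) !(dot_mul B x2) ![dot x1 (_ *m B^T)]dotC ![dot x2 (_ *m B^T)]dotC.
move=> d1 d2 d3 d4 d5 d6 d7 d8.
have I1 : - g + r * P = a * X by rewrite /g /P /X; lra.
have J1 : r * Q = - b * X by rewrite /Q /X; lra.
have I2 : - P - r * al = a * Yp by rewrite /P /al /Yp; lra.
have J2 : Q = - b * Yp by rewrite /Q /Yp; lra.
have hal : mu * Yp <= al.
  rewrite /al /Yp mulrDr.
  by apply: lerD; rewrite -dot_scalar loewner_dot.
have hg : g ^+ 2 <= L ^+ 2 * X ^+ 2.
  have := CS2 x1 x2 (x1 *m C) (x2 *m C).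
  rewrite [dot x1 (x1 *m C)]dotC [dot x2 (x2 *m C)]dotC -/g -/X => h.
  have h1 := opnorm_dot (ltW L0) hC x1; have h2 := opnorm_dot (ltW L0) hC x2.
  rewrite hCsym in h1 h2.
  have : X * (dot (x1 *m C) (x1 *m C) + dot (x2 *m C) (x2 *m C)) <= X * (L ^+ 2 * X).
    by rewrite ler_wpM2l ?addr_ge0 ?dot_ge0 // mulrDr lerD.
  have := sqr_ge0 (dot x2 (x1 *m C) - dot x1 (x2 *m C)).
  rewrite expr2 [L ^+ 2 * (X * X)]mulrCA; lra.
have hPQ : P ^+ 2 + Q ^+ 2 <= L ^+ 2 * X * Yp.
  have := CS2 x1 x2 (y1 *m B^T) (y2 *m B^T).
  rewrite [dot x1 (y1 *m B^T)]dotC [dot x2 (y2 *m B^T)]dotC [dot x2 (y1 *m B^T)]dotC.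
  rewrite [dot x1 (y2 *m B^T)]dotC -/P -/Q -/X => h.
  have h1 := opnorm_dot (ltW L0) hB y1; have h2 := opnorm_dot (ltW L0) hB y2.
  apply: le_trans h _.
  have -> : L ^+ 2 * X * Yp = X * (L ^+ 2 * Yp) by ring.
  by rewrite ler_wpM2l ?addr_ge0 ?dot_ge0 // /Yp mulrDr lerD.
have X0 : 0 <= X by rewrite addr_ge0 ?dot_ge0.
have Y0 : 0 <= Yp by rewrite addr_ge0 ?dot_ge0.
have XY0 : 0 < X + Yp.
  rewrite lt_def addr_ge0 // andbT; apply/negP => /eqP h.
  have := dot_ge0 x1; have := dot_ge0 x2; have := dot_ge0 y1; have := dot_ge0 y2.
  move=> g1 g2 g3 g4.
  have h1 : dot x1 x1 = 0 by move: h; rewrite /X /Yp; lra.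
  have h2 : dot x2 x2 = 0 by move: h; rewrite /X /Yp; lra.
  have h3 : dot y1 y1 = 0 by move: h; rewrite /X /Yp; lra.
  have h4 : dot y2 y2 = 0 by move: h; rewrite /X /Yp; lra.
  move: pq0; rewrite pE qE (dot_eq0 h1) (dot_eq0 h2) (dot_eq0 h3) (dot_eq0 h4).
  by rewrite row_mx0 eqxx.
exact: (core_cplx hmu hmuL hr muxL b0 X0 Y0 XY0 hal hg hPQ I1 I2 J1 J2).
Qed.

Section SpecSec.
Import Num.Def.
Local Open Scope complex_scope.

Lemma rc_real (R : rcfType) (x : R) : (x%:C : R[i]) \is Num.real.
Proof. by rewrite complex_real. Qed.

Lemma rc_conj (R : rcfType) (x : R) : Num.conj (x%:C : R[i]) = x%:C.
Proof. exact/conj_Creal/rc_real. Qed.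

Lemma spec_lb (R : rcfType) k (S : 'M[R]_k) lmin : S^T = S -> is_lambda_min S lmin ->
  forall x : 'rV_k, lmin * dot x x <= dot (x *m S) x.
Proof.
move=> Ssym [_ hmin] x.
pose f := real_complex R.
pose cS := map_mx f S.
have cST : map_mx Num.conj cS^T = cS.
  apply/matrixP => i j; rewrite !mxE rc_conj.
  by have := congr1 (fun M : 'M[R]_k => M i j) Ssym; rewrite mxE => ->.
have cSh : cS \is hermsymmx.
  by apply/is_hermitianmxP; rewrite expr0 scale1r cST.
have cSn := hermitian_normalmx cSh.
have /orthomx_spectralP cSE := cSn.
set P := spectralmx cS in cSE; set d := spectral_diag cS in cSE.
have Pu : P \is unitarymx by apply: spectral_unitarymx.
have PPt : P *m map_mx Num.conj P^T = 1%:M by apply/unitarymxP.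
have iP : invmx P = map_mx Num.conj P^T by rewrite invmx_unitary.
have PtP : map_mx Num.conj P^T *m P = 1%:M by rewrite -iP mulVmx // unitarymx_unit.
have dreal : d \is a realmx by apply: hermitian_spectral_diag_real.
have dge : forall j, lmin%:C <= d 0 j.
  move=> j.
  have dj : (@complex.Re R (d 0 j))%:C = d 0 j by apply: RRe_real; apply: (mxOverP dreal).
  have eig : eigenvalue cS (d 0 j).
    apply/eigenvalueP; exists (row j P).
      rewrite cSE iP !mulmxA -row_mul PPt row1 -rowE row_diag_mx -scalemxAl.
      by rewrite -rowE.
    apply/eqP => h.
    have := congr1 (fun M : 'rV[R[i]]_k => (M *m map_mx Num.conj P^T) 0 j) h.
    rewrite /= -row_mul PPt row1 mul0mx !mxE !eqxx /=.
    by move/eqP; rewrite oner_eq0.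
  have : eigenvalue S (@complex.Re R (d 0 j)).
    by move: eig; rewrite -dj !eigenvalue_root_char /cS -map_char_poly (fmorph_root f).
  by move/hmin; rewrite -dj lecR.
pose cx := map_mx f x.
have fdot : forall y z : 'rV[R]_k, f (dot y z) = (map_mx f y *m map_mx Num.conj (map_mx f z)^T) 0 0.
  move=> y z; rewrite /dot.
  have -> : f ((y *m z^T) 0 0) = (map_mx f (y *m z^T)) 0 0 by rewrite [in RHS]mxE.
  rewrite map_mxM map_trmx; congr ((_ *m _) 0 0).
  by apply/matrixP => i i'; rewrite !mxE rc_conj.
set u := cx *m map_mx Num.conj P^T.
have ut : P *m map_mx Num.conj cx^T = map_mx Num.conj u^T.
  rewrite /u trmx_mul map_mxM; congr (_ *m _).
  apply/matrixP => i i'; rewrite !mxE. exact: (esym (conjCK _)).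
have c1 : f (dot (x *m S) x) = \sum_j u 0 j * d 0 j * Num.conj (u 0 j).
  rewrite fdot map_mxM -/cS cSE iP !mulmxA -/cx -/u -mulmxA ut mxE.
  by apply: eq_bigr => j _; rewrite mul_mx_diag !mxE.
have c2 : f (dot x x) = \sum_j u 0 j * Num.conj (u 0 j).
  rewrite fdot -/cx -[cx in cx *m _]mulmx1 -PtP mulmxA -/u -mulmxA ut mxE.
  by apply: eq_bigr => j _; rewrite !mxE.
rewrite -lecR.
have -> : (lmin * dot x x)%:C = lmin%:C * f (dot x x) by exact: (rmorphM f).
have -> : (dot (x *m S) x)%:C = f (dot (x *m S) x) by [].
rewrite c2 c1 mulr_sumr.
apply: ler_sum => j _.
by rewrite [u 0 j * d 0 j]mulrC -mulrA ler_wpM2r ?mul_conjC_ge0.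
Qed.

Lemma Re_sumE (R : rcfType) k (F : 'I_k -> R[i]) :
  complex.Re (\sum_j F j) = \sum_j complex.Re (F j).
Proof.
apply: (big_ind2 (fun c r => complex.Re c = r)) => //.
by move=> [a1 b1] x2 [a2 b2] y2 /= <- <-.
Qed.

Lemma Im_sumE (R : rcfType) k (F : 'I_k -> R[i]) :
  complex.Im (\sum_j F j) = \sum_j complex.Im (F j).
Proof.
apply: (big_ind2 (fun c r => complex.Im c = r)) => //.
by move=> [a1 b1] x2 [a2 b2] y2 /= <- <-.
Qed.

Lemma reim_eig (R : rcfType) k (K : 'M[R]_k) (v : 'rV[R[i]]_k) (l : R[i]) :
  v *m cplx_mx K = l *: v ->
  let p := map_mx (@complex.Re R) v in let q := map_mx (@complex.Im R) v in
  p *m K = complex.Re l *: p - complex.Im l *: q /\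
  q *m K = complex.Re l *: q + complex.Im l *: p.
Proof.
move=> h p q; split; apply/rowP => j.
- have := congr1 (fun M : 'rV[R[i]]_k => complex.Re (M 0 j)) h.
  rewrite /= !mxE Re_sumE => e.
  transitivity (\sum_j0 complex.Re (v 0 j0 * cplx_mx K j0 j)).
    apply: eq_bigr => i _; rewrite !mxE; case: (v 0 i) => c1 c2 /=; ring.
  rewrite e; case: (l) => a b; case: (v 0 j) => c1 c2 /=; ring.
- have := congr1 (fun M : 'rV[R[i]]_k => complex.Im (M 0 j)) h.
  rewrite /= !mxE Im_sumE => e.
  transitivity (\sum_j0 complex.Im (v 0 j0 * cplx_mx K j0 j)).
    apply: eq_bigr => i _; rewrite !mxE; case: (v 0 i) => c1 c2 /=; ring.
  rewrite e; case: (l) => a b; case: (v 0 j) => c1 c2 /=; ring.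
Qed.

End SpecSec.

Import Num.Def.

Lemma specmap2 (F : fieldType) k (N : 'M[F]_k) (e z l1 : F) : e != 0 ->
  e ^+ 2 * l1 ^+ 2 + e * l1 + 1 - z = 0 ->
  eigenvalue (1%:M + e *: N + e ^+ 2 *: (N *m N)) z ->
  exists l, eigenvalue N l /\ z = 1 + e * l + e ^+ 2 * l ^+ 2.
Proof.
move=> e0 hl1 /eigenvalueP [v hv v0].
set l2 := - e^-1 - l1.
have hl2 : e ^+ 2 * l2 ^+ 2 + e * l2 + 1 - z = 0.
  rewrite -hl1 /l2; field; exact: e0.
have hv' : e ^+ 2 *: (v *m N *m N) = z *: v - v - e *: (v *m N).
  rewrite -hv !mulmxDr mulmx1 -!scalemxAr mulmxA; apply/rowP => j; rewrite !mxE; ring.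
have [w0|w0] := eqVneq (v *m N - l1 *: v) 0.
  exists l1; split; last first.
    by symmetry; transitivity ((e ^+ 2 * l1 ^+ 2 + e * l1 + 1 - z) + z); [ring | rewrite hl1 add0r].
  by apply/eigenvalueP; exists v => //; apply/eqP; rewrite -subr_eq0 w0.
exists l2; split; last first.
  by symmetry; transitivity ((e ^+ 2 * l2 ^+ 2 + e * l2 + 1 - z) + z); [ring | rewrite hl2 add0r].
apply/eigenvalueP; exists (v *m N - l1 *: v) => //.
apply/eqP; rewrite -subr_eq0; apply/eqP.
have : e ^+ 2 *: ((v *m N - l1 *: v) *m N - l2 *: (v *m N - l1 *: v)) = 0.
  rewrite mulmxBl -scalemxAl !scalerBr !scalerA hv'.
  apply/rowP => j; rewrite !mxE.
  have H : e ^+ 2 * l1 * l2 = 1 - z.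
    have -> : e ^+ 2 * l1 * l2 = - (e ^+ 2 * l1 ^+ 2 + e * l1 + 1 - z) + (1 - z).
      by rewrite /l2; field.
    by rewrite hl1 oppr0 add0r.
  have Hs : e ^+ 2 * l1 + e ^+ 2 * l2 = - e by rewrite /l2; field.
  set s := \sum_j0 _; set t := v 0 j.
  transitivity ((z - 1 + e ^+ 2 * l1 * l2) * t - (e + (e ^+ 2 * l1 + e ^+ 2 * l2)) * s).
    ring.
  by rewrite H Hs; ring.
by move/eqP; rewrite scaler_eq0 expf_eq0 (negbTE e0) andbF /= => /eqP.
Qed.

Lemma normc_le (R : rcfType) (x y d : R) : 0 <= d -> x ^+ 2 + y ^+ 2 <= d ^+ 2 ->
  ComplexField.Normc.normc (Complex x y) <= d.
Proof.
move=> d0 h /=; rewrite -(ger0_norm d0) -sqrtr_sqr; exact: ler_wsqrtr.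
Qed.

Lemma key (R : rcfType) (m n : nat)
  (A : 'M[R]_m) (B : 'M[R]_(n, m)) (C : 'M[R]_n) (L mu : R)
  (hmu : 0 < mu) (hmuL : mu <= L)
  (hAsym : A^T = A) (hCsym : C^T = C)
  (hAlo : loewner_le (mu%:M) A) (hAhi : loewner_le A (L%:M))
  (hB : opnorm2_le B L) (hC : opnorm2_le C L)
  (lmin : R) (hl0 : 0 < lmin)
  (hspec : forall x : 'rV_n, lmin * dot x x <= dot (x *m (C + B *m invmx A *m B^T)) x)
  (r : R) (hr : 2 * (L / mu) <= r) (l : R[i]) :
  eigenvalue (cplx_mx (Mmat A B C r)) l ->
  let mux := Num.min L lmin in
  let a := complex.Re l in let b := complex.Im l in
  [/\ a ^+ 2 + b ^+ 2 <= 64 / 25 * r ^+ 2 * L ^+ 2, a <= - mux / 2 &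
      8 * r * L * a + (a ^+ 2 + b ^+ 2) <= - (r * L * mux) / 2].
Proof.
move=> /eigenvalueP [v hv v0] mux a b.
have [hp hq] := reim_eig hv.
set p := map_mx _ v in hp hq; set q := map_mx _ v in hp hq.
have pq0 : (p != 0) || (q != 0).
  have [p0|] := eqVneq p 0; last by [].
  have [q0|] := eqVneq q 0; last by rewrite orbT.
  suff h : v = 0 by rewrite h eqxx in v0.
  apply/rowP => j; have := congr1 (fun M : 'rV[R]_(n + m) => M 0 j) p0.
  have := congr1 (fun M : 'rV[R]_(n + m) => M 0 j) q0; rewrite !mxE.
  by case: (v 0 j) => c1 c2 /= -> ->.
have muxL : mux <= L by rewrite /mux ge_min lexx.
have [b0|b0] := eqVneq b 0.
  rewrite -/a -/b b0 in hp hq.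
  rewrite scale0r subr0 in hp; rewrite scale0r addr0 in hq.
  have [/andP [p0 _]|] := boolP ((p != 0) && true).
    have := real_case hmu hmuL hAsym hCsym hAlo hAhi hB hC hl0 hspec hr p0 hp.
    by rewrite b0 expr0n /= addr0.
  rewrite andbT => /negPn/eqP p0; rewrite p0 eqxx /= in pq0.
  have := real_case hmu hmuL hAsym hCsym hAlo hAhi hB hC hl0 hspec hr pq0 hq.
  by rewrite b0 expr0n /= addr0.
exact: (cplx_case hmu hmuL hAsym hCsym hAlo hB hC muxL hr pq0 b0 hp hq).
Qed.

Lemma spec1 (F : fieldType) k (N : 'M[F]_k) (e z : F) : e != 0 ->
  eigenvalue (1%:M + e *: N) z -> eigenvalue N ((z - 1) / e).
Proof.
move=> e0 /eigenvalueP [v hv v0]; apply/eigenvalueP; exists v => //.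
move: hv; rewrite mulmxDr mulmx1 -scalemxAr => hv.
have h : e *: (v *m N) = z *: v - v by rewrite -hv [v + _]addrC addrK.
have -> : v *m N = e^-1 *: (z *: v - v) by rewrite -h scalerA mulVf // scale1r.
rewrite scalerBr scalerA -scalerBl; congr (_ *: _).
by rewrite mulrBl mul1r mulrC.
Qed.

Lemma scaled (R : rcfType) (r L mux e a b : R) : 0 < r -> 0 < L -> e * (4 * r * L) = 1 ->
  [/\ a ^+ 2 + b ^+ 2 <= 64 / 25 * r ^+ 2 * L ^+ 2, a <= - mux / 2 &
      8 * r * L * a + (a ^+ 2 + b ^+ 2) <= - (r * L * mux) / 2] ->
  [/\ (e * a) ^+ 2 + (e * b) ^+ 2 <= 4 / 25, e * a <= - (8 * (mux * e / 16)) &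
      2 * (e * a) + ((e * a) ^+ 2 + (e * b) ^+ 2) <= - (2 * (mux * e / 16))].
Proof.
move=> r0 L0 he [h1 h2 h3].
have e0 : 0 < e.
  have : 0 < e * (4 * r * L) by rewrite he.
  by rewrite pmulr_lgt0 // !mulr_gt0.
have e2 : 0 <= e ^+ 2 by rewrite sqr_ge0.
have erl : e * r * L = 1 / 4.
  have -> : e * r * L = (e * (4 * r * L)) / 4 by field.
  by rewrite he.
have k1 : e ^+ 2 * (a ^+ 2 + b ^+ 2) <= e ^+ 2 * (64 / 25 * r ^+ 2 * L ^+ 2).
  by rewrite ler_wpM2l.
have k2 : e * a <= e * (- mux / 2) by rewrite ler_wpM2l // ltW.
have k3 : e ^+ 2 * (8 * r * L * a + (a ^+ 2 + b ^+ 2)) <= e ^+ 2 * (- (r * L * mux) / 2).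
  by rewrite ler_wpM2l.
have q1 : e ^+ 2 * (64 / 25 * r ^+ 2 * L ^+ 2) = 64 / 25 * (e * r * L) ^+ 2 by ring.
have q2 : e ^+ 2 * (8 * r * L * a + (a ^+ 2 + b ^+ 2)) =
    8 * (e * r * L) * (e * a) + ((e * a) ^+ 2 + (e * b) ^+ 2) by ring.
have q3 : e ^+ 2 * (- (r * L * mux) / 2) = - ((e * r * L) * e * mux) / 2 by ring.
rewrite q1 erl in k1; rewrite q2 erl in k3; rewrite q3 erl in k3.
have q4 : e ^+ 2 * (a ^+ 2 + b ^+ 2) = (e * a) ^+ 2 + (e * b) ^+ 2 by ring.
rewrite q4 in k1.
have q5 : e * (- mux / 2) = - (8 * (mux * e / 16)) by field.
have q6 : - (1 / 4 * e * mux) / 2 = - (2 * (mux * e / 16)) by field.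
have q7 : 8 * (1 / 4) * (e * a) = 2 * (e * a) by field.
have q8 : (64 / 25 * (1 / 4) ^+ 2 : R) = 4 / 25 by field.
rewrite q5 in k2; rewrite q6 q7 in k3; rewrite q8 in k1.
by split.
Qed.

Local Open Scope complex_scope.

Theorem lemma2 (R : rcfType) (m n : nat)
  (A : 'M[R]_m) (B : 'M[R]_(n, m)) (C : 'M[R]_n) (L mu : R)
  (hmu : 0 < mu) (hmuL : mu <= L)
  (hAsym : A^T = A) (hCsym : C^T = C)
  (hAlo : loewner_le (mu%:M) A) (hAhi : loewner_le A (L%:M))
  (hB : opnorm2_le B L) (hC : opnorm2_le C L)
  (hS : pd (C + B *m invmx A *m B^T))
  (lmin : R) (hlmin : is_lambda_min (C + B *m invmx A *m B^T) lmin)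
  (r : R) (hr : 2 * (L / mu) <= r)
  (rho1 rho2 : R) :
  let mu_x := Num.min L lmin in
  let kappa_x := L / mu_x in
  let eta_x := (4 * r * L)^-1 in
  let M := Mmat A B C r in
  is_spectral_radius (1%:M + eta_x *: M) rho1 ->
  is_spectral_radius (1%:M + eta_x *: M + eta_x ^+ 2 *: (M *m M)) rho2 ->
  Num.max rho1 rho2 <= 1 - (64 * r * kappa_x)^-1.
Proof.
move=> mux kx e M [[z1 [hz1 nz1]] _] [[z2 [hz2 nz2]] _].
have L0 : 0 < L := lt_le_trans hmu hmuL.
have rmu := rmu_ge hmu hr.
have r0 : 0 < r.
  have : 0 < r * mu by apply: lt_le_trans rmu; rewrite mulr_gt0.
  by rewrite pmulr_lgt0.
have Ssym : (C + B *m invmx A *m B^T)^T = C + B *m invmx A *m B^T.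
  by rewrite linearD /= !trmx_mul trmxK trmx_inv hAsym hCsym mulmxA.
have hspec := spec_lb Ssym hlmin.
have hl0 : 0 < lmin.
  case: hlmin => /eigenvalueP [w hw w0] _.
  have := pd_dot hS w0; rewrite hw dotZl pmulr_lgt0 //.
  by rewrite lt_def dot_ge0 andbT; apply/negP => /eqP /dot_eq0 h; rewrite h eqxx in w0.
have mux0 : 0 < mux by rewrite /mux lt_min L0.
have muxL : mux <= L by rewrite /mux ge_min lexx.
have he : e * (4 * r * L) = 1 by rewrite /e mulVf // mulf_neq0 ?mulf_neq0 ?gt_eqF.
have e0 : 0 < e by rewrite /e invr_gt0 !mulr_gt0.
have hd : (64 * r * kx)^-1 = mux * e / 16.
  rewrite /kx /e; field; rewrite ?gt_eqF //.
rewrite hd.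
set dd := mux * e / 16.
have dd0 : 0 <= dd by rewrite /dd divr_ge0 ?mulr_ge0 ?ltW.
have dd1 : dd <= 1.
  have : mux * e <= L * e by rewrite (ler_wpM2r (ltW e0)).
  have : L * e = (4 * r)^-1 by rewrite /e; field; rewrite ?gt_eqF.
  have r2 : 2 <= r by nra.
  have : (4 * r)^-1 <= 1 by rewrite invf_le1 ?mulr_gt0 //; lra.
  rewrite /dd; lra.
have KEY := key hmu hmuL hAsym hCsym hAlo hAhi hB hC hl0 hspec hr.
pose f := real_complex R.
have cE : forall k (X : 'M[R]_k), cplx_mx X = map_mx f X by [].
have ef0 : f e != 0 by rewrite fmorph_eq0 gt_eqF.
rewrite ge_max; apply/andP; split.
- rewrite -nz1.
  move: hz1; rewrite cE map_mxD map_mx1 map_mxZ -cE => /(spec1 ef0) hl.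
  have [k1 k2 k3] := scaled r0 L0 he (KEY _ hl).
  have ez : z1 = 1 + f e * ((z1 - 1) / f e) by field.
  move: k1 k2 k3; case: ((z1 - 1) / f e) ez => a b ez /= k1 k2 k3.
  rewrite ez /f /=.
  apply: normc_le; first by lra.
  rewrite -/mux -/dd in k2 k3.
  rewrite mul0r subr0 add0r mul0r addr0.
  have -> : (1 + e * a) ^+ 2 + (e * b) ^+ 2 = 1 + 2 * (e * a) + ((e * a) ^+ 2 + (e * b) ^+ 2) by ring.
  have -> : (1 - dd) ^+ 2 = 1 - 2 * dd + dd ^+ 2 by ring.
  have := sqr_ge0 dd; lra.
- rewrite -nz2.
  move: hz2; rewrite cE !map_mxD map_mx1 !map_mxZ map_mxM rmorphXn -cE => hz2.
  set fe := f e in hz2 ef0.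
  pose s := sqrtC (fe ^+ 2 - 4 * fe ^+ 2 * (1 - z2)).
  pose l1 := (s - fe) / (2 * fe ^+ 2).
  have two0 : (2 : R[i]) != 0 by rewrite pnatr_eq0.
  have hl1 : fe ^+ 2 * l1 ^+ 2 + fe * l1 + 1 - z2 = 0.
    have -> : fe ^+ 2 * l1 ^+ 2 + fe * l1 + 1 - z2 =
      (s ^+ 2 - (fe ^+ 2 - 4 * fe ^+ 2 * (1 - z2))) / (4 * fe ^+ 2).
      by rewrite /l1; field; exact: ef0.
    by rewrite sqrtCK subrr mul0r.
  have [l [hl ez]] := specmap2 ef0 hl1 hz2.
  have [k1 k2 k3] := scaled r0 L0 he (KEY _ hl).
  move: k1 k2 k3; case: l hl ez => a b hl ez /= k1 k2 k3.
  rewrite -/mux -/dd in k2 k3.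
  have -> : z2 = (1 + e * a + ((e * a) ^+ 2 - (e * b) ^+ 2)) +i* (e * b + 2 * (e * a) * (e * b)).
    rewrite ez /fe /f expr2 expr2 /=.
    by simpc; congr Complex; ring.
  apply: normc_le; first by lra.
  exact: fin2.
Qed.
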